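(* Let $\mathcal{A}=\{\alpha_1<\dots<\alpha_m\}\subset(0,1)$, $|\mathcal{A}|=m$. Let $(b_t)$ be base forecasts with $b_t\in\mathcal{K}$ and $(y_t)$ real outcomes with $|y_t-b_t^{\alpha}|\le R$ for all $\alpha\in\mathcal{A}$ and all $t$. Let $\ell_t(\theta)=\rho_{\mathcal{A}}(b_t+\theta,y_t)$. Let $\theta_1,\dots,\theta_T$ be the played offsets of MultiQT with learning rate $\eta>0$ started from $\tilde\theta_1=\mathbf{0}$, and let $\mathcal{C}=\bigcap_{t=1}^{T+1}(\mathcal{K}-b_t)$. Then for every $\theta\in\mathcal{C}$, $$\frac1T\sum_{t=1}^T\ell_t(\theta_t)-\frac1T\sum_{t=1}^T\ell_t(\theta)\le\frac{R^2|\mathcal{A}|}{2\eta T}+2\eta|\mathcal{A}|.$$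
   Context: $\mathcal{K}=\{x\in\mathbb{R}^m:x_1\le\dots\le x_m\}$; $\Pi_C$ is Euclidean projection; $C-v=\{x-v:x\in C\}$. Quantile loss: $\rho_\alpha(\hat y,y)=\alpha|y-\hat y|$ if $y-\hat y\ge0$ and $(1-\alpha)|y-\hat y|$ otherwise; $\rho_{\mathcal{A}}(q,y)=\sum_{\alpha\in\mathcal{A}}\rho_\alpha(q^{\alpha},y)$. MultiQT with learning rate $\eta$ and initial hidden offset $\tilde\theta_1\in\mathcal{K}$: for $t=1,2,\dots$, $\theta_t=\Pi_{\mathcal{K}-b_t}(\tilde\theta_t)$, forecast $q_t=b_t+\theta_t$, $\mathrm{cov}_t^{\alpha}=\mathbb{1}\{y_t\le q_t^{\alpha}\}$, and $\tilde\theta_{t+1}^{\alpha}=\tilde\theta_t^{\alpha}-\eta(\mathrm{cov}_t^{\alpha}-\alpha)$ for each $\alpha\in\mathcal{A}$. *)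

(* Defs.v *)
From mathcomp Require Import all_boot all_order all_algebra.
From mathcomp Require Import reals.
Set Implicit Arguments. Unset Strict Implicit. Unset Printing Implicit Defensive.
Import Order.TTheory GRing.Theory Num.Theory.
Local Open Scope ring_scope.

Definition inK (R : realType) (m : nat) (x : 'I_m -> R) : Prop :=
  forall i j : 'I_m, (i <= j)%N -> x i <= x j.

Definition inK_minus (R : realType) (m : nat) (v x : 'I_m -> R) : Prop :=
  exists k : 'I_m -> R, inK k /\ x = (fun i => k i - v i).

Definition sqdist (R : realType) (m : nat) (x z : 'I_m -> R) : R :=
  \sum_(i < m) (x i - z i) ^+ 2.

(* p is the Euclidean projection of z onto the set C
   (the minimizer of the Euclidean distance to z over C; unique when C is
   closed, convex and nonempty, as is K - v). *)
Definition is_proj (R : realType) (m : nat) (C : ('I_m -> R) -> Prop)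
  (z p : 'I_m -> R) : Prop :=
  C p /\ forall x, C x -> sqdist p z <= sqdist x z.

Definition rho (R : realType) (alpha yhat y : R) : R :=
  if 0 <= y - yhat then alpha * `|y - yhat| else (1 - alpha) * `|y - yhat|.

(* rho_A(q, y) = sum over alpha in A of rho_alpha(q^alpha, y);
   A = {alpha_1 < ... < alpha_m} is given by alpha : 'I_m -> R. *)
Definition rhoA (R : realType) (m : nat) (alpha : 'I_m -> R)
  (q : 'I_m -> R) (y : R) : R :=
  \sum_(i < m) rho (alpha i) (q i) y.

Definition cov (R : realType) (y q : R) : R := if y <= q then 1 else 0.

Definition MultiQT_run (R : realType) (m : nat) (alpha : 'I_m -> R) (eta : R)
  (b : nat -> 'I_m -> R) (y : nat -> R)
  (theta thetatilde : nat -> 'I_m -> R) : Prop :=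
  forall t : nat, (1 <= t)%N ->
    is_proj (inK_minus (b t)) (thetatilde t) (theta t) /\
    forall i : 'I_m,
      thetatilde t.+1 i =
        thetatilde t i - eta * (cov (y t) (b t i + theta t i) - alpha i).

(* Main.v *)
Require Import Defs.
From mathcomp Require Import all_boot all_order all_algebra.
From mathcomp Require Import reals.
From mathcomp Require Import ring lra.
From Stdlib Require Import FunctionalExtensionality.
Import Order.TTheory GRing.Theory Num.Theory.
Local Open Scope ring_scope.

Lemma dir (R : realType) m (b z p v : 'I_m -> R) (e0 : R) :
  is_proj (inK_minus b) z p -> 0 < e0 ->
  (forall e, 0 < e <= e0 -> inK (fun i => b i + p i + e * v i)) ->
  \sum_i (z i - p i) * v i <= 0.
Proof.
move=> [_ opt] e0p hK.
set A := \sum_i (z i - p i) * v i.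
set B := \sum_i v i ^+ 2.
have B0 : 0 <= B by apply: sumr_ge0 => i _; apply: sqr_ge0.
case: (leP A 0) => // A0.
have D : 0 < e0 * B + A by nra.
set e := e0 * A / (e0 * B + A).
have e0' : 0 < e by apply: divr_gt0 => //; nra.
have e1 : e <= e0 by rewrite /e ler_pdivrMr //; nra.
have e2 : e * B < 2 * A.
  rewrite /e mulrAC ltr_pdivrMr //; nra.
have hin : inK_minus b (fun i => p i + e * v i).
  exists (fun i => b i + p i + e * v i); split; first by apply: hK; rewrite e0' e1.
  by apply: functional_extensionality => i; ring.
have := opt _ hin.
have -> : sqdist (fun i => p i + e * v i) z = sqdist p z + (e ^+ 2 * B - 2 * e * A).
  rewrite /sqdist /A /B mulr_sumr mulr_sumr -sumrB -big_split /=.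
  by apply: eq_bigr => i _; ring.
move=> h.
have : 2 * e * A <= e ^+ 2 * B by lra.
nra.
Qed.
Lemma abel_aux (R : realType) (n d : nat) : forall (j : nat) (a w : nat -> R),
  n = (j + d)%N -> ((j < n)%N -> 0 <= a j) ->
  (forall k, (j <= k)%N -> (k.+1 < n)%N -> a k <= a k.+1) ->
  (forall k, (j <= k)%N -> (k < n)%N -> \sum_(k <= i < n) w i <= 0) ->
  \sum_(j <= i < n) a i * w i <= 0.
Proof.
elim: d => [|d IH] j a w hn ha hm hw.
  by rewrite hn addn0 big_geq.
have jn : (j < n)%N by rewrite hn addnS ltnS leq_addr.
have -> : \sum_(j <= i < n) a i * w i =
   a j * \sum_(j <= i < n) w i + \sum_(j.+1 <= i < n) (a i - a j) * w i.
  rewrite (big_ltn jn) (big_ltn jn) mulrDr -addrA; congr (_ + _).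
  rewrite mulr_sumr -big_split /=; apply: eq_bigr => i _; ring.
have h1 : a j * \sum_(j <= i < n) w i <= 0.
  by apply: mulr_ge0_le0; [apply: ha | apply: hw].
suff h2 : \sum_(j.+1 <= i < n) (a i - a j) * w i <= 0 by lra.
apply: (IH j.+1 (fun i => a i - a j) w).
- by rewrite hn addSnnS.
- by move=> h; rewrite subr_ge0; apply: hm.
- move=> k hk hk2 /=; rewrite lerD2r; apply: hm => //; exact: ltnW.
- move=> k hk hk2; apply: hw => //; exact: ltnW.
Qed.

Lemma eps_seq (R : realType) m (P : pred 'I_m) (f : 'I_m -> R) (s : seq 'I_m) :
  (forall i, P i -> 0 < f i) ->
  exists e, 0 < e /\ forall i, i \in s -> P i -> e <= f i.
Proof.
move=> hf; elim: s => [|x s [e [e0 he]]].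
  by exists 1; split => //.
case Px: (P x).
  exists (Num.min e (f x)); split.
    by rewrite lt_min e0 hf.
  move=> i; rewrite in_cons => /orP[/eqP -> _|ins Pi].
    by rewrite ge_min lexx orbT.
  by rewrite ge_min he.
exists e; split => // i; rewrite in_cons => /orP[/eqP -> |]; first by rewrite Px.
exact: he.
Qed.

Lemma proj_neg (R : realType) m (alpha b z p : 'I_m -> R) (y : R) :
  (forall i j : 'I_m, (i < j)%N -> alpha i < alpha j) ->
  (forall i, 0 < alpha i < 1) ->
  is_proj (inK_minus b) z p ->
  \sum_i (cov y (b i + p i) - alpha i) * (p i - z i) <= 0.
Proof.
move=> amono abnd hp.
have Kp : inK (fun i => b i + p i).
  case: hp => [[k [hk e]] _]; rewrite e => i1 i2 h /=.
  have := hk i1 i2 h; lra.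
have Pa : forall k : nat, \sum_i (z i - p i) * (if (k <= i)%N then 1 else 0) <= 0.
  move=> k; apply: (@dir _ _ b z p _ 1) => // e /andP[e0 _] i1 i2 h.
  have := Kp i1 i2 h => /= h'.
  case: ifP => k1; case: ifP => k2; try lra.
  by rewrite (leq_trans k1 h) in k2.
have Pb : \sum_i (z i - p i) * - cov y (b i + p i) <= 0.
  have hpos : forall i, b i + p i < y -> 0 < y - (b i + p i) by move=> i hi; lra.
  have [e [e0 he]] := @eps_seq R m (fun i => b i + p i < y) (fun i => y - (b i + p i))
    (enum 'I_m) hpos.
  apply: (@dir _ _ b z p _ e) => // e' /andP[e'0 e'1] i1 i2 h.
  have := Kp i1 i2 h => /= h'; rewrite /cov.
  case: (leP y (b i1 + p i1)) => c1; case: (leP y (b i2 + p i2)) => c2; try lra.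
  have := he i1 (mem_enum _ _) c1; lra.
have Pc : \sum_i alpha i * (z i - p i) <= 0.
  case: m alpha b z p amono abnd hp Kp Pa Pb => [|m'] alpha b z p amono abnd hp Kp Pa Pb.
    by rewrite big_ord0.
  pose an n := alpha (inord n); pose wn n := z (inord n) - p (inord n).
  have := @abel_aux R m'.+1 m'.+1 0 an wn (esym (add0n _)) _ _ _.
  rewrite big_mkord.
  have -> : \sum_(i < m'.+1) an i * wn i = \sum_i alpha i * (z i - p i).
    by apply: eq_bigr => i _; rewrite /an /wn inord_val.
  apply.
  - move=> _; have := abnd (inord 0); rewrite /an; lra.
  - move=> k _ hk; rewrite /an; apply/ltW/amono.
    rewrite !inordK //; exact: ltnW.
  - move=> k _ hk.
    rewrite (big_geq_mkord k m'.+1 xpredT) big_mkcond /=.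
    apply: le_trans (Pa k); rewrite le_eqVlt; apply/orP; left; apply/eqP.
    apply: eq_bigr => i _; rewrite /wn inord_val; case: ifP => _; ring.
have -> : \sum_i (cov y (b i + p i) - alpha i) * (p i - z i) =
   \sum_i (z i - p i) * - cov y (b i + p i) + \sum_i alpha i * (z i - p i).
  by rewrite -big_split; apply: eq_bigr => i _ /=; ring.
lra.
Qed.

Lemma rho_sub (R : realType) (a x u y : R) : 0 <= a <= 1 ->
  rho a x y - rho a u y <= (cov y x - a) * (x - u).
Proof.
move=> /andP[a0 a1]; rewrite /rho /cov.
have nx : forall z : R, `|z| = if 0 <= z then z else - z.
  by move=> z; case: leP => h; [rewrite ger0_norm | rewrite ltr0_norm].
rewrite !nx.
case: (leP 0 (y - x)) => h1; case: (leP 0 (y - u)) => h2; case: (leP y x) => h3; nra.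
Qed.

Definition clip {R : realType} (Rb x : R) : R :=
  if x < - Rb then - Rb else if Rb < x then Rb else x.

Lemma rho_clip (R : realType) (a bb th y Rb : R) : 0 <= a <= 1 ->
  `|y - bb| <= Rb -> rho a (bb + clip Rb th) y <= rho a (bb + th) y.
Proof.
move=> /andP[a0 a1] /[dup] hn; rewrite ler_norml => /andP[l1 l2].
have hc : (clip Rb th = - Rb /\ th < - Rb) \/ (clip Rb th = Rb /\ Rb < th) \/
  clip Rb th = th.
  rewrite /clip; case: ltP => c1; first by left.
  by case: ltP => c2; right; [left|right].
move: hc; set cl := clip Rb th => hc.
rewrite /rho.
have nx : forall z : R, `|z| = if 0 <= z then z else - z.
  by move=> z; case: leP => h; [rewrite ger0_norm | rewrite ltr0_norm].
rewrite !nx.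
case: (leP 0 (y - (bb + cl))) => h1; case: (leP 0 (y - (bb + th))) => h2; nra.
Qed.

Lemma clip_sq (R : realType) (Rb x : R) : 0 <= Rb -> clip Rb x ^+ 2 <= Rb ^+ 2.
Proof.
move=> r0; rewrite /clip; case: ltP => c1; first by rewrite sqrrN.
case: ltP => c2 //; nra.
Qed.

Lemma step (R : realType) m (alpha b : 'I_m -> R) (y eta : R) (z z' p u : 'I_m -> R) :
  (forall i j : 'I_m, (i < j)%N -> alpha i < alpha j) ->
  (forall i, 0 < alpha i < 1) -> 0 < eta ->
  is_proj (inK_minus b) z p ->
  (forall i, z' i = z i - eta * (cov y (b i + p i) - alpha i)) ->
  rhoA alpha (fun i => b i + p i) y - rhoA alpha (fun i => b i + u i) y <=
  (sqdist z u - sqdist z' u) / (2 * eta) + eta * m%:R / 2.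
Proof.
move=> amono abnd e0 hp hz.
have h1 := @proj_neg R m alpha b z p y amono abnd hp.
rewrite /rhoA -sumrB.
apply: le_trans (_ : \sum_i (cov y (b i + p i) - alpha i) * (p i - u i) <= _).
  apply: ler_sum => i _.
  have := @rho_sub R (alpha i) (b i + p i) (b i + u i) y.
  have -> : b i + p i - (b i + u i) = p i - u i by ring.
  apply; have := abnd i; case/andP => ? ?; apply/andP; split; lra.
have -> : \sum_i (cov y (b i + p i) - alpha i) * (p i - u i) =
  \sum_i (cov y (b i + p i) - alpha i) * (p i - z i) +
  \sum_i (cov y (b i + p i) - alpha i) * (z i - u i).
  by rewrite -big_split; apply: eq_bigr => i _ /=; ring.
suff : \sum_i (cov y (b i + p i) - alpha i) * (z i - u i) <=
  (sqdist z u - sqdist z' u) / (2 * eta) + eta * m%:R / 2 by lra.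
have -> : (sqdist z u - sqdist z' u) / (2 * eta) + eta * m%:R / 2 =
  \sum_i (((z i - u i) ^+ 2 - (z' i - u i) ^+ 2) / (2 * eta) + eta / 2).
  rewrite big_split /= sumr_const card_ord -mulr_suml /sqdist sumrB.
  by rewrite -mulr_natr; field; lra.
apply: ler_sum => i _; rewrite hz.
set g := cov y (b i + p i) - alpha i.
have g1 : g ^+ 2 <= 1.
  rewrite /g /cov; have := abnd i; case/andP => ? ?; case: ifP => _; nra.
have -> : ((z i - u i) ^+ 2 - (z i - eta * g - u i) ^+ 2) / (2 * eta) =
  g * (z i - u i) - eta / 2 * g ^+ 2 by field; lra.
nra.
Qed.

Theorem proposition8 (R : realType) (m : nat) (alpha : 'I_m -> R)
  (b : nat -> 'I_m -> R) (y : nat -> R) (Rb eta : R) (T : nat)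
  (theta thetatilde : nat -> 'I_m -> R) :
  (forall i j : 'I_m, (i < j)%N -> alpha i < alpha j) ->
  (forall i : 'I_m, 0 < alpha i < 1) ->
  (forall t : nat, (1 <= t)%N -> inK (b t)) ->
  (forall t : nat, (1 <= t)%N -> forall i : 'I_m, `|y t - b t i| <= Rb) ->
  0 < eta ->
  (0 < T)%N ->
  thetatilde 1%N = (fun _ => 0) ->
  MultiQT_run alpha eta b y theta thetatilde ->
  forall th : 'I_m -> R,
    (forall t : nat, (1 <= t <= T.+1)%N -> inK_minus (b t) th) ->
    T%:R^-1 * (\sum_(1 <= t < T.+1) rhoA alpha (fun i => b t i + theta t i) (y t))
    - T%:R^-1 * (\sum_(1 <= t < T.+1) rhoA alpha (fun i => b t i + th i) (y t))
    <= Rb ^+ 2 * m%:R / (2 * eta * T%:R) + 2 * eta * m%:R.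
Proof.
move=> amono abnd bK hy e0 T0 h1 run th _.
pose u i := clip Rb (th i).
pose D t := sqdist (thetatilde t) u.
have hstep : forall t, (1 <= t)%N ->
  rhoA alpha (fun i => b t i + theta t i) (y t) - rhoA alpha (fun i => b t i + u i) (y t)
  <= (D t - D t.+1) / (2 * eta) + eta * m%:R / 2.
  move=> t ht; have [hp hz] := run t ht.
  exact: step amono abnd e0 hp hz.
have hsum : \sum_(1 <= t < T.+1) rhoA alpha (fun i => b t i + theta t i) (y t)
   - \sum_(1 <= t < T.+1) rhoA alpha (fun i => b t i + u i) (y t)
   <= (D 1%N - D T.+1) / (2 * eta) + T%:R * (eta * m%:R / 2).
  rewrite -sumrB.
  apply: le_trans (ler_sum_nat (fun t h => hstep t (proj1 (andP h)))) _.
  rewrite big_split /= sumr_const_nat -mulr_suml.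
  have -> : \sum_(1 <= t < T.+1) (D t - D t.+1) = - (D T.+1 - D 1%N).
    by rewrite -telescope_sumr // -sumrN; apply: eq_bigr => t _; ring.
  by rewrite subSS subn0 -(mulr_natl (eta * m%:R / 2) T) opprB.
have hcl : \sum_(1 <= t < T.+1) rhoA alpha (fun i => b t i + u i) (y t)
   <= \sum_(1 <= t < T.+1) rhoA alpha (fun i => b t i + th i) (y t).
  apply: ler_sum_nat => t /andP[ht _]; apply: ler_sum => i _.
  apply: rho_clip; last exact: hy.
  by have := abnd i; case/andP => ? ?; apply/andP; split; lra.
have D1 : D 1%N <= m%:R * Rb ^+ 2.
  rewrite /D h1 /sqdist.
  apply: le_trans (_ : \sum_(i < m) Rb ^+ 2 <= _); last first.
    by rewrite sumr_const card_ord mulr_natl.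
  apply: ler_sum => i _; rewrite sub0r sqrrN; apply: clip_sq.
  by apply: le_trans (hy 1%N isT i); apply: normr_ge0.
have DT : 0 <= D T.+1 by apply: sumr_ge0 => i _; apply: sqr_ge0.
have Tp : 0 < T%:R :> R by rewrite ltr0n.
set S1 := \sum_(1 <= t < T.+1) _ in hsum *.
set S2c := \sum_(1 <= t < T.+1) _ in hsum hcl.
set S2 := \sum_(1 <= t < T.+1) _ in hcl *.
have -> : Rb ^+ 2 * m%:R / (2 * eta * T%:R) = T%:R^-1 * (m%:R * Rb ^+ 2 / (2 * eta)).
  by field; lra.
have iT0 : 0 <= T%:R^-1 :> R by rewrite invr_ge0 ltW.
have key : T%:R^-1 * (S1 - S2) <= T%:R^-1 * (m%:R * Rb ^+ 2 / (2 * eta) + T%:R * (eta * m%:R / 2)).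
  apply: ler_wpM2l => //.
  have : (D 1%N - D T.+1) / (2 * eta) <= m%:R * Rb ^+ 2 / (2 * eta).
    by apply: ler_wpM2r; [rewrite invr_ge0; lra | lra].
  lra.
have E : T%:R^-1 * (m%:R * Rb ^+ 2 / (2 * eta) + T%:R * (eta * m%:R / 2)) =
  T%:R^-1 * (m%:R * Rb ^+ 2 / (2 * eta)) + eta * m%:R / 2.
  by field; lra.
rewrite E in key.
have m0 : 0 <= m%:R :> R by apply: ler0n.
have : 0 <= eta * m%:R by apply: mulr_ge0; lra.
lra.
Qed.
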